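(* Let $n\ge 6$ and let $G\in B^{+}_n$. (1) $\mathrm{irr}_t(G)\ge 2n-2$. Equality holds if and only if the degree sequence of $G$ is $(4,2,\ldots,2)$, i.e. one vertex of degree $4$ and $n-1$ vertices of degree $2$. (2) If the degree sequence of $G$ is not $(4,2,\ldots,2)$, then $\mathrm{irr}_t(G)\ge 4n-6$. Equality holds if and only if the degree sequence of $G$ is $(4,3,2,\ldots,2,1)$, i.e. one vertex of degree $4$, one of degree $3$, $n-3$ of degree $2$ and one of degree $1$.
   Context: A bicyclic graph is a simple connected graph whose number of edges equals its number of vertices plus one. For a graph $G=(V,E)$ and $w\in V$, $d_G(w)$ is the degree of $w$. The total irregularity is $\mathrm{irr}_t(G)=\frac12\sum_{x,y\in V}|d_G(x)-d_G(y)|$, where the sum runs over all ordered pairs of vertices. Degree sequences are listed in nonincreasing order. For $p,q\ge 3$ and $l\ge 1$, the $\infty$-graph $\infty(p,q,l)$ is obtained from two vertex-disjoint cycles $C_p$ and $C_q$ by joining a vertex of $C_p$ and a vertex of $C_q$ with a path having $l$ vertices (i.e. length $l-1$). When $l=1$ the two vertices are identified, so the cycles share exactly one vertex. $B^{+}_n$ denotes the set of bicyclic graphs on $n$ vertices obtained from some $\infty(p,q,1)$ by attaching trees. Equivalently, these are the bicyclic graphs on $n$ vertices whose two cycles share exactly one vertex. *)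

(* Defs.v *)
From mathcomp Require Import all_boot.
Set Implicit Arguments. Unset Strict Implicit. Unset Printing Implicit Defensive.

Definition simple_graph (n : nat) (e : rel 'I_n) : Prop :=
  symmetric e /\ irreflexive e.

Definition connected_graph (n : nat) (e : rel 'I_n) : Prop :=
  forall x y : 'I_n, connect e x y.

(* Edge set: unordered pairs {x,y}, represented by (x,y) with x < y. *)
Definition edges (n : nat) (e : rel 'I_n) : {set 'I_n * 'I_n} :=
  [set p : 'I_n * 'I_n | (val p.1 < val p.2)%N && e p.1 p.2].

Definition bicyclic (n : nat) (e : rel 'I_n) : Prop :=
  simple_graph e /\ connected_graph e /\ #|edges e| = n.+1.

Definition is_graph_cycle (n : nat) (e : rel 'I_n) (c : seq 'I_n) : Prop :=
  [/\ uniq c, (3 <= size c)%N & cycle e c].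

Definition in_Bplus (n : nat) (e : rel 'I_n) : Prop :=
  bicyclic e /\
  exists c1 c2 : seq 'I_n,
    [/\ is_graph_cycle e c1, is_graph_cycle e c2 &
        #|[set x | (x \in c1) && (x \in c2)]| = 1].

Definition deg (n : nat) (e : rel 'I_n) (x : 'I_n) : nat := #|[set y | e x y]|.

Definition absdiff (a b : nat) : nat := (a - b) + (b - a).

(* Total irregularity: 1/2 * sum over ordered pairs of |d(x) - d(y)|
   (the ordered sum is always even, so the division is exact). *)
Definition irr_t (n : nat) (e : rel 'I_n) : nat :=
  (\sum_(x : 'I_n) \sum_(y : 'I_n) absdiff (deg e x) (deg e y)) %/ 2.

Definition degseq (n : nat) (e : rel 'I_n) : seq nat :=
  sort geq [seq deg e x | x <- enum 'I_n].

(* Main.v *)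
Require Import Defs.
From mathcomp Require Import all_boot zify.

Lemma sum_nseq m x (G : nat -> nat) : \sum_(i <- nseq m x) G i = m * G x.
Proof. elim: m => [|m IH]; first by rewrite big_nil. by rewrite /= big_cons IH mulSn. Qed.

Lemma sum_absl h c : all (fun a => c <= a) h ->
  \sum_(b <- h) absdiff c b + c * size h = sumn h.
Proof.
elim: h => [|x h IH] /=; first by rewrite big_nil muln0.
case/andP => hx /IH {}IH; rewrite big_cons.
have : absdiff c x = x - c by rewrite /absdiff; lia. lia.
Qed.

Lemma sum_absr h c : all (fun a => c <= a) h ->
  \sum_(b <- h) absdiff b c + c * size h = sumn h.
Proof.
elim: h => [|x h IH] /=; first by rewrite big_nil muln0.
case/andP => hx /IH {}IH; rewrite big_cons.
have : absdiff x c = x - c by rewrite /absdiff; lia. lia.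
Qed.

Lemma all_weak h c d : c <= d -> all (fun a => d <= a) h -> all (fun a => c <= a) h.
Proof. move=> cd; elim: h => //= x h IH /andP[hx /IH ->]; rewrite andbT; lia. Qed.

Lemma sum_lt h : all (fun a => 3 <= a) h -> has (fun a => 4 <= a) h -> 3 * size h < sumn h.
Proof.
elim: h => //= x h IH /andP[hx ha] /orP[hx4|hh].
  have := @sum_absl h 3 ha; lia.
have := IH ha hh; lia.
Qed.

Lemma sum3 (h : seq nat) (F G H : nat -> nat) :
  \sum_(a <- h) (F a + (G a + H a)) = \sum_(a <- h) F a + (\sum_(a <- h) G a + \sum_(a <- h) H a).
Proof. elim: h => [|x h IH]; first by rewrite !big_nil. rewrite !big_cons IH; lia. Qed.

Lemma sumM (h : seq nat) c (F : nat -> nat) : \sum_(a <- h) c * F a = c * \sum_(a <- h) F a.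
Proof. elim: h => [|x h IH]; first by rewrite !big_nil muln0. by rewrite !big_cons IH mulnDr. Qed.

Lemma T_eq L A h :
  let t := nseq L 1 ++ nseq A 2 ++ h in
  \sum_(a <- t) \sum_(b <- t) absdiff a b =
  L * (A + \sum_(b <- h) absdiff 1 b) + A * (L + \sum_(b <- h) absdiff 2 b)
  + (L * \sum_(a <- h) absdiff a 1 + A * \sum_(a <- h) absdiff a 2
     + \sum_(a <- h) \sum_(b <- h) absdiff a b).
Proof.
move=> t.
under eq_bigr => a _ do rewrite /t !big_cat /= !sum_nseq.
rewrite !big_cat /= !sum_nseq sum3 !sumM.
have ->: absdiff 1 1 = 0 by []. have ->: absdiff 1 2 = 1 by [].
have ->: absdiff 2 1 = 1 by []. have ->: absdiff 2 2 = 0 by [].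
lia.
Qed.

Lemma sort_eqP (t D : seq nat) : sorted geq D -> (sort geq t = D <-> perm_eq t D).
Proof.
move=> sD; split.
  by move=> <-; rewrite perm_sym perm_sort perm_refl.
move=> p; rewrite -(sorted_sort (leT := geq) _ sD); last first.
  by move=> a b c /= h1 h2; exact: leq_trans h2 h1.
apply/perm_sortP => //.
- by move=> a b; exact: leq_total.
- by move=> a b c /= h1 h2; exact: leq_trans h2 h1.
- by move=> a b /andP[h1 h2]; apply/eqP; rewrite eqn_leq; apply/andP; split.
Qed.

Lemma sorted_nseq2 m : path geq 2 (nseq m 2).
Proof. by elim: m => //= m ->; rewrite andbT. Qed.

Lemma sortedD1 m : sorted geq (4 :: nseq m 2).
Proof. case: m => //= m; exact: sorted_nseq2. Qed.

Lemma sortedD2 m : sorted geq [:: 4, 3 & rcons (nseq m 2) 1].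
Proof.
rewrite /= rcons_path; case: m => //= m.
rewrite sorted_nseq2 /=; by elim: m.
Qed.

Lemma cnt0 h c : all (fun a => 3 <= a) h -> c < 3 -> count (pred1 c) h = 0.
Proof. move=> + hc; elim: h => //= x h IH /andP[hx /IH ->]. case: eqP => //= ?; lia. Qed.

Lemma cnt_t L A h a : count a (nseq L 1 ++ nseq A 2 ++ h) = a 1 * L + a 2 * A + count a h.
Proof. by rewrite !count_cat !count_nseq addnA. Qed.

Lemma key L A h n :
  all (fun a => 3 <= a) h -> has (fun a => 4 <= a) h ->
  n = L + A + size h -> 6 <= n -> L + 2 * A + sumn h = 2 * n + 2 ->
  let t := nseq L 1 ++ nseq A 2 ++ h in
  let I := (\sum_(a <- t) \sum_(b <- t) absdiff a b) %/ 2 in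
  ((2 * n - 2 <= I) /\ (I = 2 * n - 2 <-> sort geq t = 4 :: nseq (n - 1) 2)) /\
  (sort geq t <> 4 :: nseq (n - 1) 2 ->
   (4 * n - 6 <= I) /\
   (I = 4 * n - 6 <-> sort geq t = [:: 4, 3 & rcons (nseq (n - 3) 2) 1])).
Proof.
move=> hh h4 En n6 Es t I.
have R1 := @sum_absl h 1 (@all_weak h 1 3 isT hh).
have R2 := @sum_absl h 2 (@all_weak h 2 3 isT hh).
have P1 := @sum_absr h 1 (@all_weak h 1 3 isT hh).
have P2 := @sum_absr h 2 (@all_weak h 2 3 isT hh).
have Hlt := @sum_lt h hh h4.
have k1 : 0 < size h by case: (h) h4.
set k := size h in En R1 R2 P1 P2 Hlt k1.
set W := \sum_(a <- h) \sum_(b <- h) absdiff a b.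
have IE : I = (L * A + L * (L + k + 2) + A * (L + 2)) + W %/ 2.
  rewrite /I T_eq -/W.
  have -> : \sum_(b <- h) absdiff 1 b = L + k + 2 by lia.
  have -> : \sum_(b <- h) absdiff 2 b = L + 2 by lia.
  have -> : \sum_(b <- h) absdiff b 1 = L + k + 2 by lia.
  have -> : \sum_(b <- h) absdiff b 2 = L + 2 by lia.
  rewrite -divnMDl //; congr (_ %/ 2); nia.
have sD1 := @sort_eqP t _ (sortedD1 (n - 1)).
have sD2 := @sort_eqP t _ (sortedD2 (n - 3)).
have c1 : count (pred1 1) t = L.
  by rewrite /t cnt_t (@cnt0 h 1 hh) //=; lia.
have c3 : count (fun a => 3 <= a) t = k.
  rewrite /t cnt_t /=; move: (hh); rewrite all_count => /eqP ->; lia.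
case: (posnP L) => [L0|Lpos].
  have k1' : k = 1 by lia.
  have [x hx] : exists x, h = [:: x].
    by move: k1'; rewrite /k; case: (h) => [|x [|y r]] //; exists x.
  have x4 : x = 4 by move: Es; rewrite hx /=; lia.
  subst x.
  have pD1 : sort geq t = 4 :: nseq (n - 1) 2.
    apply/sD1/permP => a; rewrite /t cnt_t hx /= count_nseq; lia.
  have W0 : W = 0 by rewrite /W hx !big_cons !big_nil.
  rewrite IE W0 pD1.
  split; first by split; [lia | split => // _; lia].
  by [].
have nD1 : sort geq t <> 4 :: nseq (n - 1) 2.
  move/sD1/permP => /(_ (pred1 1)); rewrite c1 /= count_nseq /=; lia.
have S_eq : sumn h = L + 2 * k + 2 by lia.
have kL : k <= L + 1 by lia.
have Xb : 4 * n - 7 <= L * A + L * (L + k + 2) + A * (L + 2).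
  rewrite En; have : L = 1 \/ L = 2 \/ L = 3 \/ 4 <= L by lia.
  case=> [L1|[L2|[L3|L4]]]; try (rewrite ?L1 ?L2 ?L3 in kL *; nia).
have Xs : ~ (L = 1 /\ k = 2) -> 4 * n - 6 < L * A + L * (L + k + 2) + A * (L + 2).
  move=> nn; rewrite En; have : L = 1 \/ L = 2 \/ L = 3 \/ 4 <= L by lia.
  case=> [L1|[L2|[L3|L4]]]; try (rewrite ?L2 ?L3 in kL *; nia).
rewrite -/t.
split.
  split; first by lia.
  split=> [|/nD1] //; lia.
move=> _.
case: (boolP ((L == 1) && (k == 2))) => [/andP[/eqP L1 /eqP k2]|nLk].
  have [x [y hxy]] : exists x y, h = [:: x; y].
    by move: k2; rewrite /k; case: (h) => [|x [|y [|z r]]] //; exists x, y.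
  have xy : x + y = 7 /\ 3 <= x /\ 3 <= y.
    by move: S_eq hh; rewrite hxy L1 k2 /=; lia.
  have W2 : W = 2.
    rewrite /W hxy !big_cons !big_nil /absdiff; lia.
  have pD2 : sort geq t = [:: 4, 3 & rcons (nseq (n - 3) 2) 1].
    apply/sD2/permP => a; rewrite /t cnt_t hxy /= -cats1 count_cat count_nseq /=.
    have [[-> ->]|[-> ->]] : (x = 3 /\ y = 4) \/ (x = 4 /\ y = 3) by lia.
    - rewrite L1; lia.
    - rewrite L1; lia.
  rewrite IE W2 pD2 L1; split; first nia.
  split=> // _; nia.
have Xs' := Xs (fun p => let: conj a b := p in negP nLk (introT andP (conj (introT eqP a) (introT eqP b)))).
split; first by lia.
split; first by lia.
move/sD2/permP => P.
have := P (pred1 1); have := P (fun a => 3 <= a).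
rewrite c1 c3 /= -!cats1 !count_cat !count_nseq /=.
move=> H1 H2; case/andP: nLk; split; apply/eqP; lia.
Qed.

Lemma deg_sum n (e : rel 'I_n) : simple_graph e -> \sum_(x : 'I_n) deg e x = 2 * #|edges e|.
Proof.
case=> sym irr.
have D : forall x, deg e x = \sum_(y : 'I_n) (e x y : nat).
  move=> x; rewrite /deg -sum1_card big_mkcond /=; apply: eq_bigr => y _.
  by rewrite inE; case: (e x y).
have E : #|edges e| = \sum_(x : 'I_n) \sum_(y : 'I_n) ((val x < val y) && e x y : nat).
  rewrite /edges -sum1_card big_mkcond /= pair_big /=; apply: eq_bigr => p _.
  by rewrite inE; case: ((val p.1 < val p.2) && e p.1 p.2).
have E2 : \sum_(x : 'I_n) \sum_(y : 'I_n) ((val y < val x) && e x y : nat) = #|edges e|.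
  rewrite E exchange_big /=; apply: eq_bigr => x _; apply: eq_bigr => y _.
  by rewrite sym.
under eq_bigr => x _ do rewrite D.
have P : forall x y : 'I_n, (e x y : nat) = ((val x < val y) && e x y : nat) + ((val y < val x) && e x y : nat).
  move=> x y; case: (ltngtP (val x) (val y)) => //= exy.
  by rewrite addn0.
  have exy' : x = y by apply: val_inj.
  by subst; rewrite irr.
under eq_bigr => x _ do under eq_bigr => y _ do rewrite P.
rewrite (eq_bigr (fun x => \sum_(y : 'I_n) ((val x < val y) && e x y : nat) + \sum_(y : 'I_n) ((val y < val x) && e x y : nat))); last by move=> x _; rewrite big_split.
have E' : #|edges e| = \sum_(x : 'I_n) \sum_(y : 'I_n) ((nat_of_ord x < nat_of_ord y) && e x y : nat) by exact: E.
rewrite big_split /= E2 -E'; by rewrite addnn mul2n.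
Qed.

Lemma deg_pos n (e : rel 'I_n) : 2 <= n -> connected_graph e -> forall x, 0 < deg e x.
Proof.
move=> n2 con x.
have [y xy] : exists y : 'I_n, y != x.
  have h0 : 0 < n by lia. have h1 : 1 < n by lia.
  case: (eqVneq x (Ordinal h0)) => [ex|ne]; last by exists (Ordinal h0); rewrite eq_sym.
  by exists (Ordinal h1); rewrite ex; apply/eqP => /(congr1 val).
case/connectP: (con x y) => [[|z p]] /=; first by move=> _ eyx; rewrite eyx eqxx in xy.
case/andP=> exz _ _.
rewrite /deg card_gt0; apply/set0Pn; exists z; by rewrite inE.
Qed.

Lemma cyc_nb n (e : rel 'I_n) c v : symmetric e -> is_graph_cycle e c -> v \in c ->
  exists y z, [/\ y \in c, z \in c, y != z & [/\ y != v, z != v, e v y & e v z]].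
Proof.
move=> sym [uc sc cc] vc.
have := rot_index vc; set r := drop _ _ ++ take _ _ => Er.
have uc' : uniq (v :: r) by rewrite -Er rot_uniq.
have cc' : cycle e (v :: r) by rewrite -Er rot_cycle.
have sc' : 3 <= size (v :: r) by rewrite -Er size_rot.
have mc : forall w, w \in v :: r -> w \in c by move=> w; rewrite -Er mem_rot.
case: r uc' cc' sc' mc {Er} => [|y r] //; case/lastP: r => [|r z] //.
move=> uc' cc' _ mc.
exists y, z.
move: cc'; rewrite /= rcons_path => /and3P [evy _ ezv].
rewrite last_rcons in ezv.
move: uc'; rewrite /= !inE mem_rcons !inE negb_or => /andP[/andP[vy vz] /andP [yz _]].
split.
- by apply: mc; rewrite !inE eqxx orbT.
- by apply: mc; rewrite !inE mem_rcons !inE eqxx !orbT.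
- by move: yz; rewrite mem_rcons inE negb_or => /andP[].
split.
- by rewrite eq_sym.
- by move: vz; rewrite negb_or eq_sym => /andP[].
- exact: evy.
- by rewrite sym.
Qed.

Lemma deg4 n (e : rel 'I_n) : in_Bplus e -> exists v, 4 <= deg e v.
Proof.
case=> [[[sym _] _] [c1 [c2 [g1 g2 /eqP/cards1P [v Ev]]]]].
have : v \in [set x | (x \in c1) && (x \in c2)] by rewrite Ev set11.
rewrite inE => /andP[v1 v2].
have only : forall w, w \in c1 -> w \in c2 -> w = v.
  by move=> w w1 w2; apply/set1P; rewrite -Ev inE w1 w2.
have [y1 [z1 [y1c z1c yz1 [y1v z1v ey1 ez1]]]] := @cyc_nb n e _ v sym g1 v1.
have [y2 [z2 [y2c z2c yz2 [y2v z2v ey2 ez2]]]] := @cyc_nb n e _ v sym g2 v2.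
exists v.
have dif : forall a b, a \in c1 -> b \in c2 -> a != v -> a != b.
  by move=> a b ac bc av; apply/eqP => eab; subst b; rewrite (only a ac bc) eqxx in av.
have U : uniq [:: y1; z1; y2; z2].
  rewrite /= !inE !negb_or yz1 (dif y1 y2) // (dif y1 z2) // (dif z1 y2) // (dif z1 z2) //.
  by rewrite yz2.
have := card_uniqP U => /= C.
rewrite -C /deg; apply: subset_leq_card; apply/subsetP => w.
by rewrite !inE => /or4P [] /eqP ->.
Qed.

Lemma decomp (s : seq nat) a : all (fun x => 0 < x) s ->
  count a s = a 1 * count_mem 1 s + a 2 * count_mem 2 s + count a (filter (fun x => 3 <= x) s).
Proof.
elim: s => [|x s IH] /=; first by rewrite !muln0.
move=> /andP[x0 /IH ->].
case: x x0 => [|[|[|x]]] //= _; lia.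
Qed.

Lemma sum_s n (e : rel 'I_n) (F : nat -> nat) :
  \sum_(a <- [seq deg e x | x <- enum 'I_n]) F a = \sum_(x : 'I_n) F (deg e x).
Proof. by rewrite big_map big_enum. Qed.

Theorem theorem12 (n : nat) (e : rel 'I_n) :
  (6 <= n)%N -> in_Bplus e ->
  ((2 * n - 2 <= irr_t e)%N /\
   (irr_t e = 2 * n - 2 <-> degseq e = 4 :: nseq (n - 1) 2))
  /\
  (degseq e <> 4 :: nseq (n - 1) 2 ->
   (4 * n - 6 <= irr_t e)%N /\
   (irr_t e = 4 * n - 6 <-> degseq e = [:: 4, 3 & rcons (nseq (n - 3) 2) 1])).
Proof.
move=> n6 B.
have [v v4] := @deg4 n e B.
case: (B) => [[sg [con ne]] _].
set s := [seq deg e x | x <- enum 'I_n].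
have sz : size s = n by rewrite size_map size_enum_ord.
have sm : sumn s = 2 * n + 2.
  by rewrite sumnE sum_s (@deg_sum n e sg) ne; lia.
have pos : all (fun x => 0 < x) s.
  apply/allP => d /mapP [x _ ->]; apply: (@deg_pos n e) => //; lia.
set L := count_mem 1 s; set A := count_mem 2 s; set h := filter (fun x => 3 <= x) s.
have P : perm_eq s (nseq L 1 ++ nseq A 2 ++ h).
  by apply/permP => a; rewrite cnt_t (@decomp s a pos).
have hh : all (fun a => 3 <= a) h by apply: filter_all.
have h4 : has (fun a => 4 <= a) h.
  apply/hasP; exists (deg e v) => //; rewrite mem_filter.
  apply/andP; split; first lia.
  by apply: map_f; rewrite mem_enum.
have En : n = L + A + size h.
  by rewrite -sz (perm_size P) !size_cat !size_nseq addnA.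
have Es : L + 2 * A + sumn h = 2 * n + 2.
  by rewrite -sm (perm_sumn P) !sumn_cat !sumn_nseq; lia.
have := @key L A h n hh h4 En n6 Es.
have -> : irr_t e = (\sum_(a <- s) \sum_(b <- s) absdiff a b) %/ 2.
  by rewrite /irr_t sum_s; congr (_ %/ 2); apply: eq_bigr => x _; rewrite sum_s.
rewrite (perm_big _ P); under eq_bigr => a _ do rewrite (perm_big _ P).
have -> : degseq e = sort geq (nseq L 1 ++ nseq A 2 ++ h).
  apply/perm_sortP => //.
  - by move=> a b; exact: leq_total.
  - by move=> a b c /= h1 h2; exact: leq_trans h2 h1.
  - by move=> a b /andP[h1 h2]; apply/eqP; rewrite eqn_leq; apply/andP; split.
done.
Qed.
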